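(* Let $\Omega$ be a set of additive functions $\psi:\mathcal{C}\to\mathbb{R}$ satisfying $|\psi(\mathcal{L})|\le g_4(\mathcal{L})$ for all $\mathcal{L}\in\mathcal{C}$, and let $\nu_1,\nu_2:\mathcal{C}\to\mathbb{Z}$ be additive functions. If $\mathcal{K},\mathcal{J}\in\mathcal{C}$ satisfy $\nu_1(\mathcal{K})=1$ and $\nu_2(\mathcal{J})=1$, then \[\delta([\mathcal{K}],[\mathcal{J}])\ge\inf_{a,b\in\mathbb{Z},\ ab\neq0}\ \sup_{\psi\in\Omega}\ \big|a\psi(\mathcal{K})-b\psi(\mathcal{J})\big|.\]
   Context: $\mathcal{C}$ is the smooth knot concordance group; $g_4$ is the smooth four-genus; $d(\mathcal{K},\mathcal{J})=g_4(\mathcal{K}\,\#\,-\mathcal{J})$. Let $\mathcal{C}^\circ=\mathcal{C}\setminus\{0\}$; $\mathcal{K}\sim'\mathcal{J}$ if there exist $\mathcal{M}\in\mathcal{C}$ and $r,s\in\mathbb{Z}$ with $\mathcal{K}=r\mathcal{M}$, $\mathcal{J}=s\mathcal{M}$; $\sim$ is the equivalence relation generated by $\sim'$; $\mathbb{P}(\mathcal{C})=\mathcal{C}^\circ/\sim$. $\delta([\mathcal{K}],[\mathcal{J}])=\min\{d(\mathcal{K}',\mathcal{J}'):\mathcal{K}'\in[\mathcal{K}],\mathcal{J}'\in[\mathcal{J}]\}$. *)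

(* Defs.v *)
From HB Require Import structures.
From mathcomp Require Import all_boot all_order all_algebra.
From mathcomp Require Import all_classical all_reals ereal.

From Stdlib Require Import Relations.
Set Implicit Arguments. Unset Strict Implicit. Unset Printing Implicit Defensive.
Import Order.TTheory GRing.Theory Num.Theory.
Local Open Scope ring_scope.
Local Open Scope classical_set_scope.

(* The smooth concordance group is modelled abstractly as an arbitrary
   abelian group C (a zmodType) together with an arbitrary nat-valued
   "four-genus" g4 : C -> nat. *)

Definition additive_fun (C A : zmodType) (f : C -> A) : Prop :=
  forall x y : C, f (x + y) = f x + f y.

Definition sim' (C : zmodType) (K J : C) : Prop :=
  exists (M : C) (r s : int), K = M *~ r /\ J = M *~ s.

Definition sim (C : zmodType) (K J : C) : Prop :=
  clos_refl_sym_trans C (fun x y => x <> 0 /\ y <> 0 /\ sim' x y) K J.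

Definition dist (C : zmodType) (g4 : C -> nat) (K J : C) : nat := g4 (K - J).

(* delta([K],[J]) = min { d(K',J') : K' ~ K, J' ~ J }, as an extended real
   (the infimum of a nonempty set of naturals, which is attained). *)
Definition delta (R : realType) (C : zmodType) (g4 : C -> nat) (K J : C)
  : \bar R :=
  ereal_inf [set ((dist g4 K' J')%:R)%:E
            | K' in [set K' | sim K' K] & J' in [set J' | sim J' J]].

(* Main.v *)
Require Import Defs.
From HB Require Import structures.
From mathcomp Require Import all_boot all_order all_algebra.
From mathcomp Require Import all_classical all_reals ereal.
From Stdlib Require Import Relations.

Set Implicit Arguments. Unset Strict Implicit.
Import Order.TTheory GRing.Theory Num.Theory.
Local Open Scope ring_scope.
Local Open Scope classical_set_scope.

Definition relq (C : zmodType) (x y : C) : Prop :=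
  exists p q : int, p != 0 /\ q != 0 /\ x *~ p = y *~ q.

Lemma sim_relq (C : zmodType) (x y : C) : sim x y -> relq x y.
Proof.
elim => {x y}.
- move=> x y [xn0 [yn0 [M [r [s [ex ey]]]]]]; subst x y.
  have r0 : r != 0 by apply/negP => r0; apply: xn0; rewrite (eqP r0) mulr0z.
  have s0 : s != 0 by apply/negP => s0; apply: yn0; rewrite (eqP s0) mulr0z.
  by exists s, r; do 2 split => //; rewrite -!mulrzA mulrC.
- by move=> x; exists 1, 1.
- by move=> x y _ [p [q [p0 [q0 e]]]]; exists q, p.
- move=> x y z _ [p [q [p0 [q0 e]]]] _ [p' [q' [p0' [q0' e']]]].
  exists (p * p'), (q * q'); split; first by rewrite mulf_neq0.
  split; first by rewrite mulf_neq0.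
  by rewrite !mulrzA e -!mulrzA (mulrC q p') (mulrzA y) e' -!mulrzA (mulrC q' q).
Qed.

Lemma add_zmul (C A : zmodType) (f : C -> A) : additive_fun f ->
  forall x n, f (x *~ n) = f x *~ n.
Proof.
move=> Hf.
have f0 : f 0 = 0 by apply: (addrI (f 0)); rewrite -Hf !addr0.
have fN : forall x, f (- x) = - f x.
  by move=> x; apply: (addrI (f x)); rewrite -Hf !subrr f0.
have fn : forall x k, f (x *+ k) = f x *+ k.
  by move=> x; elim => [|k IH]; rewrite ?mulr0n ?f0 // !mulrS Hf IH.
move=> x [k|k]; first exact: fn.
by rewrite !NegzE !mulrNz fN fn.
Qed.

Theorem theorem7p3 (R : realType) (C : zmodType) (g4 : C -> nat)
  (Omega : set (C -> R))
  (HOmega_add : forall psi, Omega psi -> additive_fun psi)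
  (HOmega_bd : forall psi, Omega psi -> forall L : C, `|psi L| <= (g4 L)%:R)
  (nu1 nu2 : C -> int)
  (Hnu1 : additive_fun nu1) (Hnu2 : additive_fun nu2)
  (K J : C) (HK : nu1 K = 1) (HJ : nu2 J = 1) :
  (ereal_inf
     [set ereal_sup [set (`|ab.1%:~R * psi K - ab.2%:~R * psi J|)%:E
                    | psi in Omega]
     | ab in [set ab : int * int | (ab.1 * ab.2 != 0)%R]]
   <= delta R g4 K J)%E.
Proof.
apply: le_ereal_inf_tmp => _ [K' /sim_relq HK'] [J' /sim_relq HJ'] <-.
have key : forall (nu : C -> int) (X X' : C), additive_fun nu -> nu X = 1 ->
    relq X' X -> nu X' != 0 /\
    forall psi : C -> R, additive_fun psi -> (nu X')%:~R * psi X = psi X'.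
  move=> nu X X' Hnu HX [p [q [p0 [q0 e]]]].
  have epq : q = p * nu X'.
    have := congr1 nu e; rewrite !(add_zmul Hnu) HX !mulrzz mul1r.
    by rewrite mulrC => ->.
  split.
    by apply/eqP => h; move: q0; rewrite epq h mulr0 eqxx.
  move=> psi Hpsi; have := congr1 psi e; rewrite !(add_zmul Hpsi) epq => e2.
  have pR : (p%:~R : R) != 0 by rewrite intr_eq0.
  by apply: (mulfI pR); rewrite mulrA -intrM mulrzl -e2 mulrzl.
have [a0 Ha] := key nu1 K K' Hnu1 HK HK'.
have [b0 Hb] := key nu2 J J' Hnu2 HJ HJ'.
apply: ge_ereal_inf.
exists (ereal_sup [set (`|(nu1 K')%:~R * psi K - (nu2 J')%:~R * psi J|)%:E
                    | psi in Omega]).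
  by exists (nu1 K', nu2 J') => //=; rewrite mulf_neq0.
apply: ge_ereal_sup => _ [psi Opsi <-] /=.
have Hp := HOmega_add _ Opsi.
rewrite lee_fin Ha // Hb //.
have -> : psi K' - psi J' = psi (K' - J').
  by rewrite Hp -mulrN1z (add_zmul Hp) mulrN1z.
exact: HOmega_bd.
Qed.
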